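(* Let $\kappa$ satisfy (A-$\kappa$) in the context, and let $0<\delta_0<1$ and $r_0>0$. Then for every positive integer $k$ there exist $\mu=\mu(r_0,\delta_0,k)>0$ and a positive integer $i=i(r_0,\delta_0,k)$ such that $$\inf_{x\in B_{kr_0}(0)}\sum_{j=0}^{i}\frac{(\mathcal{K}^ju)(x)}{j!}\ge\mu$$ for every $u\in L^\infty(\mathbb{R}^N)$ with $u\ge0$ and $\int_{B_{r_0}(0)}u\,dx\ge\delta_0$. In particular, for such $u$, $(e^{\mathcal{K}}u)(x)\ge\mu$ for all $x\in B_{kr_0}(0)$.
   Context: Assumption (A-$\kappa$): $\kappa\in C^1(\mathbb{R}^N,[0,\infty))$, $\kappa(0)>0$, $\int_{\mathbb{R}^N}\kappa=1$, and there are $\mu',M>0$ with $\kappa(x)\le e^{-\mu'|x|}$ and $|\nabla\kappa(x)|\le e^{-\mu'|x|}$ for $|x|\ge M$. $\mathcal{K}$ is the convolution operator $(\mathcal{K}u)(x)=\int_{\mathbb{R}^N}\kappa(y-x)u(y)\,dy$ on $L^\infty(\mathbb{R}^N)$, $\mathcal{K}^j$ its $j$-th power ($\mathcal{K}^0=I$), $e^{\mathcal{K}}=\sum_{j\ge0}\mathcal{K}^j/j!$, and $B_r(x_0)=\{x\in\mathbb{R}^N:|x-x_0|<r\}$. *)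

(* Defs.v *)
From HB Require Import structures.
From mathcomp Require Import all_boot all_order all_algebra.
From mathcomp Require Import all_classical all_reals all_analysis.
Set Implicit Arguments. Unset Strict Implicit. Unset Printing Implicit Defensive.
Import Order.TTheory GRing.Theory Num.Theory.
Import numFieldNormedType.Exports.
Local Open Scope classical_set_scope.
Local Open Scope ring_scope.

Definition enorm (R : realType) (N : nat) (x : 'rV[R]_N) : R :=
  Num.sqrt (\sum_(i < N) x ord0 i ^+ 2).

Definition eball (R : realType) (N : nat) (x0 : 'rV[R]_N) (r : R) : set 'rV[R]_N :=
  [set x | enorm (x - x0) < r].

Definition evec (R : realType) (N : nat) (i : 'I_N) : 'rV[R]_N := delta_mx ord0 i.

Definition grad (R : realType) (N : nat) (f : 'rV[R]_N -> R) (x : 'rV[R]_N) : 'rV[R]_N :=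
  \row_(i < N) ('D_(evec R i) f x).

Definition C1 (R : realType) (N : nat) (f : 'rV[R]_N -> R) : Prop :=
  (forall (i : 'I_N) (x : 'rV[R]_N), derivable f x (evec R i)) /\
  (forall i : 'I_N, continuous (fun x => 'D_(evec R i) f x)).

(* Borel measurability of a real function on R^N: measurability with respect to
   the product (= Borel) sigma-algebra on N.-tuple R. *)
Definition RN_measurable (R : realType) (N : nat) (f : 'rV[R]_N -> R) : Prop :=
  measurable_fun [set: N.-tuple R] (fun t : N.-tuple R => f (\row_(i < N) tnth t i)).

(* Lebesgue integral over R^N of a NONNEGATIVE measurable function, computed as
   the iterated one-dimensional Lebesgue integral (Tonelli).  Coordinate n is
   integrated last at level n.+1. *)
Fixpoint iint (R : realType) (n : nat) (g : (nat -> R) -> \bar R) (v : nat -> R)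
  : \bar R :=
  match n with
  | 0 => g v
  | n'.+1 => (\int[@lebesgue_measure R]_(t in [set: R])
               iint n' g (fun k => if k == n' then t else v k))%E
  end.

Definition RNint (R : realType) (N : nat) (f : 'rV[R]_N -> \bar R) : \bar R :=
  iint N (fun v => f (\row_(i < N) v (nat_of_ord i))) (fun _ => 0).

Definition Kop (R : realType) (N : nat) (kappa : 'rV[R]_N -> R)
  (u : 'rV[R]_N -> \bar R) (x : 'rV[R]_N) : \bar R :=
  RNint (fun y => ((kappa (y - x))%:E * u y)%E).

Fixpoint Kpow (R : realType) (N : nat) (kappa : 'rV[R]_N -> R) (j : nat)
  (u : 'rV[R]_N -> \bar R) : 'rV[R]_N -> \bar R :=
  match j with
  | 0 => u
  | j'.+1 => Kop kappa (Kpow kappa j' u)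
  end.

Definition A_kappa (R : realType) (N : nat) (kappa : 'rV[R]_N -> R) : Prop :=
  [/\ C1 kappa,
      (forall x, 0 <= kappa x),
      0 < kappa 0,
      RNint (fun x => (kappa x)%:E) = 1%E &
      exists mu' M : R, [/\ 0 < mu', 0 < M &
        forall x, M <= enorm x ->
          kappa x <= expR (- (mu' * enorm x)) /\
          enorm (grad kappa x) <= expR (- (mu' * enorm x))]].

(* Main.v *)
Require Import Defs.
From HB Require Import structures.
From mathcomp Require Import all_boot all_order all_algebra.
From mathcomp Require Import all_classical all_reals all_analysis.
From mathcomp Require Import measurable_realfun.
From mathcomp Require Import lra ring.
Set Implicit Arguments. Unset Strict Implicit. Unset Printing Implicit Defensive.
Import Order.TTheory GRing.Theory Num.Theory.
Import numFieldNormedType.Exports.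
Local Open Scope classical_set_scope.
Local Open Scope ring_scope.

Section P1.
Variable R : realType.
Local Notation mu := (@lebesgue_measure R).
Local Open Scope ereal_scope.

Lemma int_mono (f g : R -> \bar R) : (forall x, 0 <= f x) -> (forall x, f x <= g x) ->
  \int[mu]_x f x <= \int[mu]_x g x.
Proof.
move=> f0 fg.
have g0 : forall x, 0 <= g x by move=> x; apply: le_trans (fg x).
rewrite !ge0_integralTE //; apply: ereal_sup_le => _ [h hf <-].
exists h => //= x; exact: le_trans (hf x) (fg x).
Qed.

Lemma iint_ge0 n (g : (nat -> R) -> \bar R) v : (forall w, 0 <= g w) -> 0 <= iint n g v.
Proof.
move=> g0; elim: n v => [|n IH] v /=; first exact: g0.
by apply: integral_ge0 => t _; exact: IH.
Qed.

Lemma iint_mono n (g1 g2 : (nat -> R) -> \bar R) v : (forall w, 0 <= g1 w) ->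
  (forall w, g1 w <= g2 w) -> iint n g1 v <= iint n g2 v.
Proof.
move=> g0 g12; elim: n v => [|n IH] v /=; first exact: g12.
apply: int_mono => t; [exact: iint_ge0| exact: IH].
Qed.

Lemma iint_box n (g : (nat -> R) -> \bar R) v (l : nat -> R) (h a : R) :
  (0 <= h)%R -> (0 <= a)%R -> (forall w, 0 <= g w) ->
  (forall w, (forall k, (k < n)%N -> (l k <= w k <= l k + h)%R) ->
     (forall k, (n <= k)%N -> w k = v k) -> a%:E <= g w) ->
  (a * h ^+ n)%:E <= iint n g v.
Proof.
move=> h0 a0 g0; elim: n v => [|n IH] v Hg /=.
  by rewrite expr0 mulr1; apply: Hg => // k.
have c0 : (0 <= a * h ^+ n)%R by rewrite mulr_ge0 // exprn_ge0.
apply: (@le_trans _ _ (\int[mu]_t ((a * h ^+ n) * \1_(`[l n, l n + h]%classic) t)%:E)).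
  under eq_integral do rewrite EFinM.
  rewrite ge0_integralZl_EFin //; last first.
    by apply/measurable_EFinP; exact: measurable_indic.
  rewrite integral_indic // setIT.
  have := @lebesgue_measure_itv R `[l n, l n + h]%R; rewrite /= => ->.
  rewrite lte_fin; case: ltP => hh.
    by rewrite -EFinB -EFinM addrAC subrr add0r exprSr mulrA.
  have -> : h = 0%R by apply/eqP; rewrite eq_le h0 andbT -(lerD2l (l n)) addr0.
  by rewrite expr0n /= !mulr0 mule0.
apply: int_mono => t.
  by rewrite lee_fin mulr_ge0 // indicE.
rewrite indicE; case: (boolP (t \in _)) => tin; last first.
  by rewrite mulr0; apply: iint_ge0.
rewrite mulr1; apply: IH => w Hb Ht; apply: Hg.
  move=> k; rewrite ltnS leq_eqVlt => /orP[/eqP ->|]; last exact: Hb.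
  by rewrite (Ht n (leqnn n)) eqxx; move: tin => /set_mem /=; rewrite in_itv.
move=> k kn; rewrite (Ht k (ltnW kn)) ifF //.
by apply/negbTE; rewrite neq_ltn kn orbT.
Qed.

End P1.

Section P2.
Variable R : realType.
Local Notation mu := (@lebesgue_measure R).
Local Open Scope ereal_scope.

Definition Meas (g : (nat -> R) -> \bar R) : Prop :=
  forall (d : measure_display) (X : measurableType d) (Phi : X -> nat -> R),
    (forall k, measurable_fun setT (fun x => Phi x k)) ->
    measurable_fun setT (fun x => g (Phi x)).

Lemma iint_meas n g : Meas g -> (forall w, 0 <= g w) -> Meas (iint n g).
Proof.
move=> mg g0; elim: n => [|n IH] //= d X Phi mPhi.
pose F := fun p : X * R => iint n g (fun k => if k == n then p.2 else Phi p.1 k).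
have mF : measurable_fun setT F.
  apply: (IH _ _ (fun p : X * R => fun k => if k == n then p.2 else Phi p.1 k)) => k.
  case: (k == n); first exact: measurable_snd.
  exact: measurableT_comp (mPhi k) measurable_fst.
have F0 : forall p, 0 <= F p by move=> p; exact: iint_ge0.
exact: (measurable_fun_fubini_tonelli_F (m2 := mu) F mF F0).
Qed.

Lemma ifb_meas (b : bool) (c : R) :
  measurable_fun setT (fun t : R => if b then t else c).
Proof. by case: b; [exact: measurable_id | exact: measurable_cst]. Qed.

Lemma iintD n g1 g2 v : Meas g1 -> Meas g2 -> (forall w, 0 <= g1 w) ->
  (forall w, 0 <= g2 w) ->
  iint n (fun w => g1 w + g2 w) v = iint n g1 v + iint n g2 v.
Proof.
move=> m1 m2 p1 p2; elim: n v => [|n IH] v //=.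
under eq_integral do rewrite IH.
apply: ge0_integralD => //.
- by move=> t _; exact: iint_ge0.
- apply: (iint_meas n m1 p1) => k.
  exact: ifb_meas.
- by move=> t _; exact: iint_ge0.
- apply: (iint_meas n m2 p2) => k.
  exact: ifb_meas.
Qed.

Lemma iintZ n g v (c : R) : Meas g -> (forall w, 0 <= g w) -> (0 <= c)%R ->
  iint n (fun w => c%:E * g w) v = c%:E * iint n g v.
Proof.
move=> mg g0 c0; elim: n v => [|n IH] v //=.
under eq_integral do rewrite IH.
apply: ge0_integralZl_EFin => //.
- by move=> t _; exact: iint_ge0.
- apply: (iint_meas n mg g0) => k.
  exact: ifb_meas.
Qed.

Lemma iint0 n v : iint n (fun _ => 0) v = 0 :> \bar R.
Proof.
elim: n v => [|n IH] v //=.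
under eq_integral do rewrite IH.
exact: integral0.
Qed.

Lemma Meas_sum (I : eqType) (s : seq I) (G : I -> (nat -> R) -> \bar R) :
  (forall i, Meas (G i)) -> Meas (fun w => \sum_(i <- s) G i w).
Proof.
move=> mG d X Phi mPhi; elim: s => [|i s IH].
  under eq_fun do rewrite big_nil; exact: measurable_cst.
under eq_fun do rewrite big_cons.
exact: emeasurable_funD (mG i _ _ Phi mPhi) IH.
Qed.

Lemma iint_sum n (I : eqType) (s : seq I) (G : I -> (nat -> R) -> \bar R) v :
  (forall i, Meas (G i)) -> (forall i w, 0 <= G i w) ->
  iint n (fun w => \sum_(i <- s) G i w) v = \sum_(i <- s) iint n (G i) v.
Proof.
move=> mG G0; elim: s => [|i s IH].
  under eq_fun do rewrite big_nil; rewrite big_nil; exact: iint0.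
under eq_fun do rewrite big_cons; rewrite big_cons -IH.
apply: iintD => //; first exact: Meas_sum.
by move=> w; apply: sume_ge0 => j _; exact: G0.
Qed.

End P2.

Section P3.
Variable R : realType.

Lemma mxnorm_lt N (y : 'rV[R]_N) (e : R) : 0 < e -> (forall k, `|y ord0 k| < e) -> `|y| < e.
Proof.
move=> e0 H; rewrite (_ : `|y| = mx_norm y) // mx_normrE.
apply: bigmax_lt => // -[i k] _ /=.
by rewrite (ord1 i); exact: H.
Qed.

Lemma evecE N (i k : 'I_N) : (evec R i) ord0 k = (k == i)%:R.
Proof. by rewrite /evec mxE eqxx. Qed.

Lemma step_bound N (kappa : 'rV[R]_N -> R) (j : 'I_N) (x : 'rV[R]_N) (a M : R) :
  (forall y, derivable kappa y (evec R j)) ->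
  (forall t, `|t| <= `|a| -> `|'D_(evec R j) kappa (x + t *: evec R j)| <= M) ->
  `|kappa (x + a *: evec R j) - kappa x| <= M * `|a|.
Proof.
move=> der Hb.
set e := evec R j.
pose phi := fun t : R => kappa (x + t *: e).
have E : forall t, (fun h : R => h^-1 *: ((phi \o shift t) (h *: (1:R)) - phi t)) =
   (fun h => h^-1 *: ((kappa \o shift (x + t *: e)) (h *: e) - kappa (x + t *: e))).
  move=> t; apply: funext => h /=; rewrite /phi; congr (_ *: (kappa _ - _)).
  rewrite (_ : h%:A = h); last exact: mulr1.
  by rewrite scalerDl addrCA addrA.
have dphi : forall t, derivable phi t 1 by move=> t; rewrite /derivable E; exact: der.
have Dphi : forall t : R, is_derive t (1:R) phi ('D_e kappa (x + t *: e)).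
  by move=> t; apply: DeriveDef => //; rewrite /derive E.
have cphi : forall a b : R, {within `[a, b], continuous phi}.
  by move=> a' b'; apply: derivable_within_continuous => t _; exact: dphi.
have M0 : 0 <= M by apply: le_trans (Hb 0 _) => //; rewrite normr0.
have [a0|a0|a0] := ltgtP a 0.
- have [c cin Hc] := MVT a0 (fun t _ => Dphi t) (cphi a 0).
  move: Hc; rewrite /phi scale0r addr0 => Hc.
  rewrite distrC Hc normrM sub0r normrN ler_wpM2r //.
  apply: Hb; move: cin; rewrite in_itv /= => /andP[c1 c2].
  by rewrite !ltr0_norm // ?lerN2 ?ltW.
- have [c cin Hc] := MVT a0 (fun t _ => Dphi t) (cphi 0 a).
  move: Hc; rewrite /phi scale0r addr0 => Hc.
  rewrite Hc normrM subr0 ler_wpM2r //.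
  apply: Hb; move: cin; rewrite in_itv /= => /andP[c1 c2].
  by rewrite !gtr0_norm // ltW.
- by rewrite a0 scale0r addr0 subrr !normr0 mulr0.
Qed.


Lemma kappa_pos N (kappa : 'rV[R]_N -> R) : C1 kappa -> 0 < kappa 0 ->
  exists s c : R, [/\ 0 < s, 0 < c &
    forall z : 'rV[R]_N, (forall i, `|z ord0 i| < s) -> c <= kappa z].
Proof.
move=> [der cont] k0.
pose D := fun (i : 'I_N) x => 'D_(evec R i) kappa x.
have near1 : \forall z \near (0 : 'rV[R]_N), forall i, `|D i 0 - D i z| < 1.
  have := @filter_forall _ _ (fun i z => `|D i 0 - D i z| < 1) (nbhs (0 : 'rV[R]_N)).
  move=> H; apply: H => i.
  exact: (cvgr_dist_lt (fun x => D i x) (D i 0) (cont i 0)).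
move: near1 => /nbhs_normP [del /= del0 Hdel].
have Db : forall i (y : 'rV[R]_N), (forall k, `|y ord0 k| < del) -> `|D i y| <= `|D i 0| + 1.
  move=> i y Hy.
  have := Hdel y; rewrite /ball_ /= sub0r normrN => /(_ (mxnorm_lt del0 Hy)) /(_ i) H.
  rewrite -[D i y](subKr (D i 0)) (le_trans (ler_normB _ _)) // lerD2l ltW //.
pose L := \sum_(i < N) (`|D i 0| + 1).
have L0 : 0 <= L by apply: sumr_ge0 => i _; rewrite addr_ge0.
pose s := Num.min del (kappa 0 / (2 * (L + 1))).
have s0 : 0 < s by rewrite lt_min del0 divr_gt0 // mulr_gt0 // ltr_wpDl.
exists s, (kappa 0 / 2); split => //; first by rewrite divr_gt0.
move=> z Hz.
pose p := fun j : nat => \row_(i < N) (if (i < j)%N then z ord0 i else 0).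
have p0 : p 0%N = 0 by apply/rowP => i; rewrite !mxE.
have pN : p N = z by apply/rowP => i; rewrite !mxE ltn_ord.
have pS : forall j : 'I_N, p j.+1 = p j + z ord0 j *: evec R j.
  move=> j; apply/rowP => i; rewrite !mxE (_ : (_ == ord0) = true) //=.
  case: (ltngtP (val i) (val j)) => [ij|ji|ij].
  - have -> : (i == j) = false by apply/negbTE; rewrite -val_eqE /= neq_ltn ij.
    by rewrite ltnS ltnW // mulr0 addr0.
  - have -> : (i == j) = false by apply/negbTE; rewrite -val_eqE /= neq_ltn ji orbT.
    by rewrite ltnS leqNgt ji /= add0r mulr0.
  - have -> : i = j by apply: val_inj.
    by rewrite ltnSn eqxx mulr1 add0r.
have Hsd : forall i, `|z ord0 i| < del.
  by move=> i; apply: lt_le_trans (Hz i) _; rewrite ge_min lexx.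
have step : forall j : 'I_N, `|kappa (p j.+1) - kappa (p j)| <= (`|D j 0| + 1) * s.
  move=> j; rewrite pS.
  apply: (le_trans (step_bound (x := p j) (a := z ord0 j) (M := `|D j 0| + 1) (fun y => der j y) _)); last first.
    by rewrite ler_wpM2l ?addr_ge0 // ltW.
  move=> t Ht; apply: Db => k; rewrite !mxE (_ : (_ == ord0) = true) //=.
  case: (ltngtP (val k) (val j)) => [kj|jk|kj].
  - have -> : (k == j) = false by apply/negbTE; rewrite -val_eqE /= neq_ltn kj.
    by rewrite mulr0 addr0.
  - have -> : (k == j) = false by apply/negbTE; rewrite -val_eqE /= neq_ltn jk orbT.
    by rewrite mulr0 addr0 normr0.
  - have -> : k = j by apply: val_inj.
    by rewrite eqxx add0r mulr1; apply: le_lt_trans Ht _.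
have tel : kappa z - kappa 0 = \sum_(j < N) (kappa (p j.+1) - kappa (p j)).
  rewrite -pN -[in X in _ - kappa X]p0 -(telescope_sumr (fun j => kappa (p j))) //.
  by rewrite big_mkord.
have bnd : `|kappa z - kappa 0| <= L * s.
  rewrite tel mulr_suml; apply: le_trans (ler_norm_sum _ _ _) _.
  by apply: ler_sum => j _; exact: step.
have Ls : L * s <= kappa 0 / 2.
  apply: le_trans (_ : L * (kappa 0 / (2 * (L + 1))) <= _).
    by rewrite ler_wpM2l // ge_min lexx orbT.
  rewrite mulrA ler_pdivrMr ?mulr_gt0 ?ltr_wpDl // mulrA.
  rewrite [kappa 0 / 2 * 2]mulrAC -mulrA divff ?mulr1 ?pnatr_eq0 //.
  by rewrite mulrC ler_pM2l // lerDl.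
have h1 : kappa 0 - kappa z <= kappa 0 / 2.
  by rewrite (le_trans (ler_norm _)) // distrC (le_trans bnd Ls).
lra.
Qed.

End P3.

Section P4.
Variable R : realType.
Local Open Scope ereal_scope.

Definition lnat N (l : 'I_N -> R) (k : nat) : R :=
  if insub k is Some i then l i else 0%R.

Lemma lnatE N (l : 'I_N -> R) (i : 'I_N) : lnat l i = l i.
Proof. by rewrite /lnat valK. Qed.

Lemma RNint_box N (f : 'rV[R]_N -> \bar R) (l : 'I_N -> R) (h a : R) :
  (0 <= h)%R -> (0 <= a)%R -> (forall y, 0 <= f y) ->
  (forall y : 'rV[R]_N, (forall i : 'I_N, l i <= y ord0 i <= l i + h)%R -> a%:E <= f y) ->
  (a * h ^+ N)%:E <= RNint f.
Proof.
move=> h0 a0 f0 Hf; rewrite /RNint.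
apply: (iint_box (l := lnat l)) => // w Hw _; apply: Hf => i; rewrite mxE -lnatE.
exact: Hw i (ltn_ord i).
Qed.

Lemma growth N (kappa : 'rV[R]_N -> R) (c s : R) (v : 'rV[R]_N -> \bar R)
  (z0 : 'rV[R]_N) (Rr m : R) :
  (0 < c)%R -> (0 < s)%R -> (forall x, 0 <= kappa x)%R ->
  (forall z : 'rV[R]_N, (forall i, `|z ord0 i| < s)%R -> c <= kappa z)%R ->
  (forall y, 0 <= v y) -> (s / 2 < Rr)%R -> (0 <= m)%R ->
  (forall y : 'rV[R]_N, (forall i, `|y ord0 i - z0 ord0 i| < Rr)%R -> m%:E <= v y) ->
  forall x : 'rV[R]_N, (forall i, `|x ord0 i - z0 ord0 i| < Rr + s / 4)%R ->
  (c * m * (s / 4) ^+ N)%:E <= Kop kappa v x.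
Proof.
move=> c0 s0 kp kc v0 sR m0 Hv x Hx; rewrite /Kop.
apply: (RNint_box (l := fun i => if (z0 ord0 i <= x ord0 i)%R then x ord0 i - s / 2
                                 else x ord0 i + s / 4)%R).
- by rewrite divr_ge0 // ltW.
- by rewrite mulr_ge0 // ltW.
- by move=> y; rewrite mule_ge0 // lee_fin.
move=> y Hy; rewrite EFinM; apply: lee_pmul; rewrite ?lee_fin ?(ltW c0) //.
  apply: kc => i; rewrite !mxE.
  move: (Hy i) (Hx i); case: ifP => _ /andP[h1 h2]; rewrite !ltr_norml => /andP[h3 h4];
    apply/andP; split; lra.
apply: Hv => i.
move: (Hy i) (Hx i); case: ifP => hz /andP[h1 h2]; rewrite !ltr_norml => /andP[h3 h4];
  apply/andP; split; lra.
Qed.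

End P4.

Section P5.
Variable R : realType.
Local Open Scope ereal_scope.

Lemma coord_le_enorm N (y : 'rV[R]_N) (i : 'I_N) : (`|y ord0 i| <= enorm y)%R.
Proof.
rewrite /enorm -sqrtr_sqr ler_sqrt; last by apply: sumr_ge0 => j _; rewrite sqr_ge0.
by rewrite (bigD1 i) //= lerDl sumr_ge0 // => j _; rewrite sqr_ge0.
Qed.

Lemma pigeon (I : finType) (X : I -> \bar R) (d : R) : (0 < d)%R -> (0 < #|I|)%N ->
  d%:E <= \sum_(i : I) X i -> exists i, (d / (2 * #|I|%:R))%:E <= X i.
Proof.
move=> d0 I0 H; apply/not_existsP => Hn.
have Hlt : forall i, X i <= (d / (2 * #|I|%:R))%:E.
  by move=> i; apply/ltW; rewrite ltNge; apply/negP => /Hn.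
have : \sum_(i : I) X i <= \sum_(i : I) (d / (2 * #|I|%:R))%:E by apply: lee_sum => i _.
rewrite sumEFin sumr_const => H2.
have := le_trans H H2; rewrite lee_fin.
have M0 : (0 < #|I|%:R :> R)%R by rewrite ltr0n.
have -> : (d / (2 * #|I|%:R) *+ #|I| = d / 2 :> R)%R.
  rewrite -mulr_natr.
  by field; rewrite gt_eqF.
lra.
Qed.

Definition rw N (w : nat -> R) : 'rV[R]_N := \row_(i < N) w i.

Lemma meas_u N (u : 'rV[R]_N -> R) : RN_measurable u ->
  forall (d : measure_display) (X : measurableType d) (Phi : X -> nat -> R),
    (forall k, measurable_fun setT (fun x => Phi x k)) ->
    measurable_fun setT (fun x => u (rw N (Phi x))).
Proof.
move=> mu d X Phi mPhi.
have -> : (fun x => u (rw N (Phi x))) =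
   (fun t : N.-tuple R => u (\row_(i < N) tnth t i)) \o (fun x => [tuple Phi x i | i < N]).
  by apply: funext => x /=; congr u; apply/rowP => i; rewrite !mxE tnth_mktuple.
apply: measurableT_comp; first exact: mu.
apply/measurable_fun_tnthP => i.
have -> : (tnth (T:=R))^~ i \o (fun x => [tuple Phi x i0 | i0 < N]) = (fun x => Phi x i).
  by apply: funext => x /=; rewrite tnth_mktuple.
exact: mPhi.
Qed.

Definition ind01 (a b t : R) : R := if (a <= t <= b)%R then 1%R else 0%R.

Lemma ind01_meas a b : measurable_fun setT (ind01 a b).
Proof.
have -> : ind01 a b = \1_(`[a, b]%classic : set R).
  apply: funext => t; rewrite /ind01 indicE.
  have -> : (t \in (`[a, b]%classic : set R)) = (a <= t <= b)%R.
    apply/idP/idP => [/set_mem /=|H]; first by rewrite in_itv.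
    by apply/mem_set; rewrite /= in_itv.
  by case: ifP.
exact: measurable_indic.
Qed.

Lemma prod_meas (d : measure_display) (X : measurableType d) (I : Type) (s : seq I)
  (g : I -> X -> R) : (forall i, measurable_fun setT (g i)) ->
  measurable_fun setT (fun x => \prod_(i <- s) g i x)%R.
Proof.
move=> mg; elim: s => [|i s IH].
  by under eq_fun do rewrite big_nil; exact: measurable_cst.
under eq_fun do rewrite big_cons.
exact: measurable_funM.
Qed.

End P5.

Section P6.
Variable R : realType.
Local Open Scope ereal_scope.

Definition mmf (r0 s : R) : nat := (Num.trunc (4 * r0 / s)).+1.

Lemma first_step N (kappa : 'rV[R]_N -> R) (c s r0 d0 : R) :
  (0 < c)%R -> (0 < s)%R -> (0 < r0)%R -> (0 < d0)%R -> (forall x, 0 <= kappa x)%R ->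
  (forall z : 'rV[R]_N, (forall i, `|z ord0 i| < s)%R -> c <= kappa z)%R ->
  forall u : 'rV[R]_N -> R, RN_measurable u -> (forall y, 0 <= u y)%R ->
  d0%:E <= RNint (fun y => (\1_(eball 0 r0) y * u y)%:E) ->
  exists z : 'rV[R]_N, (forall i, `|z ord0 i| <= r0)%R /\
    forall x : 'rV[R]_N, (forall i, `|x ord0 i - z ord0 i| < 3 * s / 4)%R ->
    (c * (d0 / (2 * #|{ffun 'I_N -> 'I_(mmf r0 s)}|%:R)))%:E
      <= Kop kappa (fun y => (u y)%:E) x.
Proof.
move=> c0 s0 r00 d00 kp kc u mu u0 Hd.
set mm := mmf r0 s.
have mm0 : (0 < mm%:R :> R)%R by rewrite ltr0n.
set h := (2 * r0 / mm%:R)%R.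
have h0 : (0 < h)%R by rewrite divr_gt0 // mulr_gt0.
have mmh : (mm%:R * h = 2 * r0)%R by rewrite /h; field; rewrite gt_eqF.
have hs : (h <= s / 2)%R.
  have Hm : (4 * r0 / s < mm%:R)%R by rewrite /mm /mmf; apply: truncnS_gt.
  move: Hm; rewrite ltr_pdivrMr // => Hm.
  rewrite /h ler_pdivrMr //.
  lra.
pose lo (f : {ffun 'I_N -> 'I_mm}) (i : 'I_N) := (- r0 + (f i)%:R * h)%R.
pose bx (f : {ffun 'I_N -> 'I_mm}) (y : 'rV[R]_N) :=
  (\prod_(i < N) ind01 (lo f i) (lo f i + h) (y ord0 i))%R.
pose G (f : {ffun 'I_N -> 'I_mm}) (w : nat -> R) := (bx f (rw N w) * u (rw N w))%:E.
have bx0 : forall f y, (0 <= bx f y)%R.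
  by move=> f y; apply: prodr_ge0 => i _; rewrite /ind01; case: ifP.
have G0 : forall f w, 0 <= G f w by move=> f w; rewrite lee_fin mulr_ge0.
have mG : forall f, Meas (G f).
  move=> f d X Phi mPhi; apply/measurable_EFinP; apply: measurable_funM.
    apply: prod_meas => i.
    have -> : (fun x => ind01 (lo f i) (lo f i + h) (rw N (Phi x) ord0 i)) =
        ind01 (lo f i) (lo f i + h) \o (fun x => Phi x i).
      by apply: funext => x; rewrite /rw mxE.
    exact: measurableT_comp (ind01_meas _ _) (mPhi i).
  exact: meas_u.
have cover : forall y : 'rV[R]_N, (enorm y < r0)%R -> exists f, bx f y = 1%R.
  move=> y Hy.
  have Hyi : forall i, (`|y ord0 i| < r0)%R.
    by move=> i; apply: le_lt_trans (coord_le_enorm y i) Hy.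
  pose t i := ((y ord0 i + r0) / h)%R.
  have t0 : forall i, (0 <= t i)%R.
    move=> i; rewrite divr_ge0 ?(ltW h0) //.
    by move: (Hyi i); rewrite ltr_norml => /andP[? ?]; lra.
  have tm : forall i, (Num.trunc (t i) < mm)%N.
    move=> i; rewrite truncn_lt_nat // /t ltr_pdivrMr // mmh.
    by move: (Hyi i); rewrite ltr_norml => /andP[? ?]; lra.
  exists [ffun i => insubd (ord0 : 'I_mm) (Num.trunc (t i))].
  apply: big1 => i _; rewrite /ind01 /lo ffunE val_insubd (tm i).
  have := truncn_itv (t0 i) => /andP[k1 k2].
  have e1 : ((Num.trunc (t i))%:R * h <= t i * h)%R by rewrite ler_wpM2r // ltW.
  have e2 : (t i * h <= (Num.trunc (t i)).+1%:R * h)%R by rewrite ler_wpM2r // ltW.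
  move: e2; rewrite -addn1 natrD mulrDl mul1r => e2.
  have te : (t i * h = y ord0 i + r0)%R by rewrite /t divfK // gt_eqF.
  rewrite te in e1 e2.
  by rewrite ifT //; apply/andP; split; lra.
have stepA : d0%:E <= \sum_(f : {ffun 'I_N -> 'I_mm}) iint N (G f) (fun _ => 0%R).
  rewrite -iint_sum //; apply: le_trans Hd _; rewrite /RNint.
  apply: iint_mono => [w|w]; first by rewrite lee_fin mulr_ge0 // indicE.
  rewrite indicE; case: (boolP (rw N w \in eball 0 r0)) => Hin; last first.
    by rewrite mul0r; apply: sume_ge0 => f _.
  move: Hin => /set_mem; rewrite /eball /= subr0 => Hin.
  have [f Hf] := cover _ Hin.
  rewrite (bigD1 f) //= mul1r; apply: le_trans (leeDl _ _).
    by rewrite /G Hf mul1r.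
  by apply: sume_ge0 => g _.
have card0 : (0 < #|{ffun 'I_N -> 'I_mm}|)%N by rewrite card_ffun card_ord expn_gt0.
have [f0 Hf0] := pigeon d00 card0 stepA.
exists (\row_(i < N) (lo f0 i + h / 2))%R; split.
  move=> i; rewrite mxE /lo.
  have k1 : ((f0 i).+1 <= mm)%N := ltn_ord (f0 i).
  have k2 : ((f0 i).+1%:R * h <= mm%:R * h)%R.
    rewrite ler_wpM2r ?(ltW h0) //.
    by rewrite Num.Theory.ler_nat.
  move: k2; rewrite -addn1 natrD mulrDl mul1r mmh => k2.
  have k3 : (0 <= (f0 i)%:R * h)%R by rewrite mulr_ge0 // ltW.
  by rewrite ler_norml; apply/andP; split; lra.
move=> x Hx.
apply: le_trans (_ : (c%:E * iint N (G f0) (fun _ => 0%R)) <= _).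
  rewrite EFinM; apply: lee_pmul => //.
  - by rewrite lee_fin ltW.
  - by rewrite lee_fin divr_ge0 ?mulr_ge0 // ltW.
rewrite -iintZ //; last exact: ltW.
rewrite /Kop /RNint; apply: iint_mono => w.
  by rewrite mule_ge0 // ?lee_fin ?(ltW c0).
rewrite /G -/(rw N w).
case: (boolP [forall i, (lo f0 i <= rw N w ord0 i <= lo f0 i + h)%R]) => Hb.
  have -> : bx f0 (rw N w) = 1%R.
    by apply: big1 => i _; rewrite /ind01 (forallP Hb i).
  rewrite mul1r; apply: lee_pmul; rewrite ?lee_fin ?(ltW c0) //.
  apply: kc => i; rewrite !mxE.
  move: (forallP Hb i) (Hx i); rewrite !mxE => /andP[h1 h2].
  rewrite !ltr_norml => /andP[h3 h4]; apply/andP; split; lra.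
move: Hb; rewrite negb_forall => /existsP[i Hi].
have -> : bx f0 (rw N w) = 0%R.
  by rewrite /bx (bigD1 i) //= /ind01 (negbTE Hi) mul0r.
by rewrite mul0r mule0 mule_ge0 // lee_fin.
Qed.

End P6.

Lemma Kpow_ge0 (R : realType) N (kappa : 'rV[R]_N -> R) (u : 'rV[R]_N -> R) :
  (forall x, 0 <= kappa x) -> (forall y, 0 <= u y) ->
  forall j x, (0 <= Kpow kappa j (fun y => (u y)%:E) x)%E.
Proof.
move=> kp u0; elim=> [|j IH] x /=; first by rewrite lee_fin.
by apply: iint_ge0 => w; rewrite mule_ge0 // lee_fin.
Qed.

Unset Implicit Arguments.

Theorem proposition2p5 (R : realType) (N : nat) (kappa : 'rV[R]_N -> R)
  (hk : A_kappa kappa) (delta0 r0 : R)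
  (hd0 : 0 < delta0) (hd1 : delta0 < 1) (hr0 : 0 < r0) :
  forall k : nat, (0 < k)%N ->
  exists (mu : R) (i : nat), [/\ 0 < mu, (0 < i)%N &
    forall u : 'rV[R]_N -> R,
      RN_measurable u ->
      (exists C : R, forall y, u y <= C) ->
      (forall y, 0 <= u y) ->
      (delta0%:E <= RNint (fun y => (\1_(eball 0 r0) y * u y)%:E))%E ->
      (mu%:E <= ereal_inf [set (\sum_(j < i.+1)
                  Kpow kappa j (fun y => (u y)%:E) x * ((j`!%:R)^-1)%:E)%E
                | x in eball 0 (k%:R * r0)])%E
      /\ (forall x, eball 0 (k%:R * r0) x ->
            (mu%:E <= \sum_(0 <= j <oo)
                  (Kpow kappa j (fun y => (u y)%:E) x * ((j`!%:R)^-1)%:E))%E)].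
Proof.
move: hk => [hC1 kp k0 _ _] k kpos.
have [s [c [s0 c0 kc]]] := kappa_pos hC1 k0.
pose M : R := #|{ffun 'I_N -> 'I_(mmf r0 s)}|%:R.
have M0 : 0 < M by rewrite ltr0n card_ffun card_ord expn_gt0.
set m1 := c * (delta0 / (2 * M)).
have m10 : 0 < m1 by rewrite mulr_gt0 // divr_gt0 // mulr_gt0.
set q := c * (s / 4) ^+ N.
have q0 : 0 < q by rewrite mulr_gt0 // exprn_gt0 // divr_gt0.
set J := (Num.trunc (4 * (k%:R + 1) * r0 / s)).+1.
have HJ : 4 * (k%:R + 1) * r0 / s < J%:R by apply: truncnS_gt.
have HJ' : (k%:R + 1) * r0 < 3 * s / 4 + J%:R * s / 4.
  move: HJ; rewrite ltr_pdivrMr // => HJ.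
  have : 0 < 3 * s / 4 by lra.
  lra.
set mu := m1 * q ^+ J / (J.+1)`!%:R.
exists mu, J.+1; split => //.
  by rewrite /mu divr_gt0 ?ltr0n ?fact_gt0 // mulr_gt0 // exprn_gt0.
move=> u mu_ _ u0 Hd.
have [z [Hz Hfirst]] := first_step c0 s0 hr0 hd0 kp kc mu_ u0 Hd.
have grow : forall n (x : 'rV[R]_N), (forall i, `|x ord0 i - z ord0 i| < 3 * s / 4 + n%:R * s / 4) ->
   ((m1 * q ^+ n)%:E <= Kpow kappa n.+1 (fun y => (u y)%:E) x)%E.
  elim=> [|n IH] x Hx.
    by rewrite expr0 mulr1; apply: Hfirst => i; move: (Hx i); rewrite mul0r mul0r addr0.
  rewrite (_ : m1 * q ^+ n.+1 = c * (m1 * q ^+ n) * (s / 4) ^+ N); last first.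
    by rewrite exprS /q; ring.
  apply: (growth (z0 := z) (Rr := 3 * s / 4 + n%:R * s / 4)) => //.
  - by move=> y; exact: (Kpow_ge0 kp u0 n.+1 y).
  - have : 0 <= n%:R * s / 4 by rewrite divr_ge0 // mulr_ge0 // ltW.
    lra.
  - by rewrite mulr_ge0 // ?exprn_ge0 // ltW.
  - have e : (n.+1%:R = n%:R + 1 :> R) by rewrite mulrSr.
    move=> i; move: (Hx i); rewrite e.
    lra.
have bound : forall x : 'rV[R]_N, eball 0 (k%:R * r0) x ->
   (mu%:E <= \sum_(j < J.+2)
        Kpow kappa j (fun y => (u y)%:E) x * ((j`!%:R)^-1)%:E)%E.
  move=> x; rewrite /eball /= subr0 => Hx.
  rewrite (bigD1 ord_max) //=; apply: le_trans (leeDl _ _); last first.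
    apply: sume_ge0 => j _; rewrite mule_ge0 ?Kpow_ge0 // lee_fin invr_ge0 ler0n.
  rewrite /mu EFinM; apply: lee_pmul.
  - by rewrite lee_fin mulr_ge0 // ?exprn_ge0 // ltW.
  - by rewrite lee_fin invr_ge0 ler0n.
  - apply: grow => i.
    have h1 := le_lt_trans (coord_le_enorm x i) Hx.
    move: (Hz i) h1; rewrite !ler_norml !ltr_norml => /andP[a1 a2] /andP[a3 a4].
    apply/andP; split; lra.
  - by [].
split.
  by apply/ereal_infP => _ [x Hx <-]; exact: bound.
move=> x Hx; apply: le_trans (bound x Hx) _.
rewrite -(big_mkord xpredT (fun j => Kpow kappa j (fun y => (u y)%:E) x * ((j`!%:R)^-1)%:E)%E).
apply: nneseries_lim_ge => j _ _.
by rewrite mule_ge0 ?Kpow_ge0 // lee_fin invr_ge0 ler0n.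
Qed.
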